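(* Let $U_2$ be a unitary matrix with real entries having a unique (up to scalars) eigenvector $|\phi_0\rangle$ of eigenvalue $1$, chosen with real entries and norm $1$; let $|\mu\rangle$ be a unit vector with real entries, $U_1=I-2|\mu\rangle\langle\mu|$, $U=U_2U_1$, and $|\tilde\phi_0\rangle=|\phi_0\rangle-\langle\mu|\phi_0\rangle|\mu\rangle$. Let $\varepsilon\in(0,1)$. For every $T\ge\max\{1,\mathsf{QHT}_\varepsilon(U_2,|\mu\rangle)\}$, the procedure $\mathbf{Detect}(U,1/T,\varepsilon)$ accepts $|\tilde\phi_0\rangle$ with probability $\|\tilde\phi_0\|^2-O(\varepsilon)$ if $\langle\phi_0|\mu\rangle\ne0$, and accepts with probability $0$ otherwise. Moreover the number of applications of $\text{c-}U$ is $O(\log(1/\varepsilon)\cdot T)$.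
   Context: Decompose $|\tilde\phi_0\rangle$ in eigenvectors of the real unitary $U$: $|\tilde\phi_0\rangle=\delta_0|w_0\rangle+\sum_{1\le j\le J}\delta_j(|w_j^+\rangle+|w_j^-\rangle)+\delta_{-1}|w_{-1}\rangle$ with real coefficients, where $|w_0\rangle$ (resp. $|w_{-1}\rangle$) is a unit eigenvector of eigenvalue $1$ (resp. $-1$), and $|w_j^\pm\rangle$ are unit eigenvectors of eigenvalues $e^{\pm i\alpha_j}$, $0<\alpha_j<\pi$, with $|w_j^-\rangle=\overline{|w_j^+\rangle}$. $\mathit{QH}$ is the random variable equal to $1/\alpha_j$ with probability $2\delta_j^2$, to $1/\pi$ with probability $\delta_{-1}^2$, and to $0$ otherwise. The quantum $\varepsilon$-error $|\mu\rangle$-hitting time of $U_2$ is $\mathsf{QHT}_\varepsilon(U_2,|\mu\rangle)=\min\{y:\Pr[\mathit{QH}>y]\le\varepsilon\}$. ''Accepts with probability $p$'' on an unnormalized input means the accepting branch has squared norm $p$. $\mathbf{Estimate}$ is the standard phase estimation circuit for $U$ with precision $\Delta$ (on an eigenvector with eigenphase $\alpha\in(-\pi,\pi]$ it outputs $\alpha$ within $\Delta$ with error probability at most $1/3$, outputs $0$ with certainty on a $1$-eigenvector, and uses $O(1/\Delta)$ calls to $\text{c-}U$ and its inverse). $\mathbf{Detect}(U,\Delta,\varepsilon)$ on input $|\psi\rangle$: apply $\Theta(\log(1/\varepsilon))$ times $\mathbf{Estimate}$ with precision $\Delta$ to the same state $|\psi\rangle$; accept if at least one estimated phase is nonzero,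 otherwise reject. *)

(* Defs.v *)
From HB Require Import structures.
From mathcomp Require Import all_boot all_order all_algebra.
From mathcomp Require Import complex.
From mathcomp Require Import boolp classical_sets reals exp trigo.

Set Implicit Arguments.
Unset Strict Implicit.
Unset Printing Implicit Defensive.

Import Order.TTheory GRing.Theory Num.Theory.
Local Open Scope ring_scope.
Local Open Scope complex_scope.

Section QuantumWalkDefs.
Variable R : realType.
Local Notation C := R[i].

Definition expi (a : R) : C := cos a +i* sin a.

Definition csqn (z : C) : R := complex.Re z ^+ 2 + complex.Im z ^+ 2.

Definition vnorm2 n (v : 'cV[C]_n) : R := \sum_i csqn (v i 0).

Definition conjmx m n (A : 'M[C]_(m, n)) : 'M[C]_(m, n) := map_mx conjc A.
Definition adjmx m n (A : 'M[C]_(m, n)) : 'M[C]_(n, m) := (conjmx A)^T.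

Definition inner n (u v : 'cV[C]_n) : C := (adjmx u *m v) 0 0.

Definition unitary n (A : 'M[C]_n) : Prop := adjmx A *m A = 1%:M.

Definition real_mx m n (A : 'M[C]_(m, n)) : Prop :=
  forall i j, complex.Im (A i j) = 0.

Definition reflection n (mu : 'cV[C]_n) : 'M[C]_n :=
  1%:M - 2%:R *: (mu *m adjmx mu).

Definition tilde_phi n (phi0 mu : 'cV[C]_n) : 'cV[C]_n :=
  phi0 - inner mu phi0 *: mu.

(* The decomposition
     v = d0 w0 + sum_{j<J} d_j (w_j^+ + w_j^-) + dm1 w_{-1}
   of v in eigenvectors of the real unitary U, with real coefficients,
   w_j^- = conj(w_j^+), U w_j^+ = e^{i al_j} w_j^+, 0 < al_j < pi,
   the al_j pairwise distinct (one term per eigenphase).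
   A unit eigenvector is only required when its coefficient is nonzero
   (a vanishing component need not correspond to an actual eigenvalue). *)
Definition eigen_decomp n (U : 'M[C]_n) (v : 'cV[C]_n) (J : nat)
    (d0 dm1 : R) (d al : 'I_J -> R) (w0 wm1 : 'cV[C]_n) (wp : 'I_J -> 'cV[C]_n)
    : Prop :=
  [/\ v = d0%:C *: w0 + \sum_(j < J) (d j)%:C *: (wp j + conjmx (wp j))
          + dm1%:C *: wm1,
      d0 = 0 \/ (vnorm2 w0 = 1 /\ U *m w0 = w0),
      dm1 = 0 \/ (vnorm2 wm1 = 1 /\ U *m wm1 = - wm1),
      forall j, (0 < al j < pi) /\
        (d j = 0 \/ (vnorm2 (wp j) = 1 /\ U *m wp j = expi (al j) *: wp j))
    & injective al].

(* Pr[QH > y] where QH = 1/al_j w.p. 2 d_j^2, = 1/pi w.p. dm1^2, = 0 otherwise *)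
Definition QH_tail (J : nat) (d al : 'I_J -> R) (dm1 : R) (y : R) : R :=
  if y < 0 then 1
  else \sum_(j < J | y < (al j)^-1) 2 * d j ^+ 2
       + (if y < pi^-1 then dm1 ^+ 2 else 0).

(* QHT_eps = min { y | Pr[QH > y] <= eps }  (the minimum exists; we write inf) *)
Definition QHT (eps : R) (J : nat) (d al : 'I_J -> R) (dm1 : R) : R :=
  inf [set y : R | QH_tail d al dm1 y <= eps].

Definition close_phase (Delta o a : R) : Prop :=
  exists k : int, `|o - a - k%:~R * (2 * pi)| < Delta.

(* Estimate for U with precision Delta, described by its measurement
   operators: E o = (I (x) <o|) Circuit (I (x) |0>), outcome o having
   label (estimated phase) lab o.
   - the circuit is an isometry: sum_o E_o^* E_o = I;
   - on an eigenvector w with eigenphase a in (-pi, pi], the first register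
     is left in (a multiple of) w and, with probability >= 2/3, the output
     is within Delta of a;
   - on a 1-eigenvector the output is 0 with certainty. *)
Definition is_estimate n (U : 'M[C]_n) (Delta : R) m (lab : 'I_m -> R)
    (E : 'I_m -> 'M[C]_n) : Prop :=
  [/\ \sum_(o < m) adjmx (E o) *m E o = 1%:M,
      forall (w : 'cV[C]_n) (a : R), - pi < a <= pi ->
        U *m w = expi a *: w ->
        (forall o, exists c : C, E o *m w = c *: w) /\
        2 / 3 * vnorm2 w <=
          \sum_(o < m | `[< close_phase Delta (lab o) a >]) vnorm2 (E o *m w)
    & forall w : 'cV[C]_n, U *m w = w ->
        \sum_(o < m | lab o == 0) vnorm2 (E o *m w) = vnorm2 w].

(* Run Estimate successively (fresh output registers) along the outcome
   sequence s; the result is the (unnormalized) branch of the first register. *)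
Definition apply_seq n m (E : 'I_m -> 'M[C]_n) (s : seq 'I_m) (v : 'cV[C]_n)
    : 'cV[C]_n :=
  foldl (fun x o => E o *m x) v s.

(* Detect with k repetitions: squared norm of the accepting branch
   (at least one estimated phase nonzero). *)
Definition detect_accept n m (lab : 'I_m -> R) (E : 'I_m -> 'M[C]_n) (k : nat)
    (v : 'cV[C]_n) : R :=
  \sum_(t : k.-tuple 'I_m | has (fun o => lab o != 0) t)
     vnorm2 (apply_seq E t v).

Definition detect_reps (c0 eps : R) : nat := `|Num.ceil (c0 * ln eps^-1)|%N.

End QuantumWalkDefs.

(* Main.v *)
From Pilot Require Import Defs.
From HB Require Import structures.
From mathcomp Require Import all_boot all_order all_algebra.
From mathcomp Require Import complex.
From mathcomp Require Import boolp classical_sets reals exp trigo.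
From mathcomp Require Import ring lra zify.
Import Order.TTheory GRing.Theory Num.Theory.
Import Pilot.Defs.
Local Open Scope ring_scope.
Local Open Scope complex_scope.

Section S.
Variable R : realType.
Local Notation C := R[i].

Lemma csqnE (z : C) : (csqn z)%:C = conjc z * z.
Proof. case: z => a b; rewrite /csqn /=; apply/eqP; rewrite eq_complex /=; apply/andP; split; apply/eqP; ring. Qed.

Lemma csqn_ge0 (z : C) : 0 <= csqn z.
Proof. by rewrite /csqn addr_ge0 // sqr_ge0. Qed.

Lemma vnorm2_ge0 n (v : 'cV[C]_n) : 0 <= vnorm2 v.
Proof. by rewrite /vnorm2 sumr_ge0 // => i _; exact: csqn_ge0. Qed.

Lemma conjmxM m n p (A : 'M[C]_(m,n)) (B : 'M[C]_(n,p)) :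
  conjmx (A *m B) = (conjmx A) *m (conjmx B).
Proof. by rewrite /conjmx map_mxM. Qed.

Lemma innerE n (u v : 'cV[C]_n) : inner u v = \sum_j conjc (u j 0) * v j 0.
Proof. by rewrite /inner mxE; apply: eq_bigr => j _; rewrite !mxE. Qed.

Lemma inner_vnorm2 n (v : 'cV[C]_n) : inner v v = (vnorm2 v)%:C.
Proof. rewrite innerE /vnorm2 rmorph_sum; apply: eq_bigr => j _; exact/esym/csqnE. Qed.


Lemma adjmxM m n p (A : 'M[C]_(m,n)) (B : 'M[C]_(n,p)) :
  adjmx (A *m B) = adjmx B *m adjmx A.
Proof. by rewrite /adjmx conjmxM trmx_mul. Qed.

Lemma adjmxK m n (A : 'M[C]_(m,n)) : adjmx (adjmx A) = A.
Proof. by apply/matrixP => i j; rewrite !mxE conjcK. Qed.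

Lemma adjmxZ m n (c : C) (A : 'M[C]_(m,n)) : adjmx (c *: A) = conjc c *: adjmx A.
Proof. by apply/matrixP => i j; rewrite !mxE rmorphM. Qed.

Lemma adjmxD m n (A B : 'M[C]_(m,n)) : adjmx (A + B) = adjmx A + adjmx B.
Proof. by apply/matrixP => i j; rewrite !mxE rmorphD. Qed.

Lemma adjmxN m n (A : 'M[C]_(m,n)) : adjmx (- A) = - adjmx A.
Proof. by apply/matrixP => i j; rewrite !mxE rmorphN. Qed.

Lemma adjmx1 n : adjmx (1%:M : 'M[C]_n) = 1%:M.
Proof. by apply/matrixP => i j; rewrite !mxE rmorph_nat eq_sym. Qed.

Lemma inner_mulmx n (A : 'M[C]_n) (u v : 'cV[C]_n) :
  inner u (A *m v) = inner (adjmx A *m u) v.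
Proof. by rewrite /inner adjmxM adjmxK mulmxA. Qed.

Lemma innerZr n (c : C) (u v : 'cV[C]_n) : inner u (c *: v) = c * inner u v.
Proof. by rewrite /inner -scalemxAr mxE. Qed.

Lemma innerZl n (c : C) (u v : 'cV[C]_n) : inner (c *: u) v = conjc c * inner u v.
Proof. by rewrite /inner adjmxZ -scalemxAl mxE. Qed.

Lemma innerDr n (u v w : 'cV[C]_n) : inner u (v + w) = inner u v + inner u w.
Proof. by rewrite /inner mulmxDr mxE. Qed.

Lemma innerDl n (u v w : 'cV[C]_n) : inner (u + v) w = inner u w + inner v w.
Proof. by rewrite /inner adjmxD mulmxDl mxE. Qed.

Lemma innerNl n (u w : 'cV[C]_n) : inner (- u) w = - inner u w.
Proof. by rewrite /inner adjmxN mulNmx mxE. Qed.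

Lemma innerNr n (u w : 'cV[C]_n) : inner u (- w) = - inner u w.
Proof. by rewrite /inner mulmxN mxE. Qed.

Lemma inner_sumr n (I : finType) (u : 'cV[C]_n) (x : I -> 'cV[C]_n) :
  inner u (\sum_i x i) = \sum_i inner u (x i).
Proof.
elim/big_rec2: _ => [|i y z _ <-]; last by rewrite innerDr.
by rewrite /inner mulmx0 mxE.
Qed.

Lemma inner_suml n (I : finType) (u : 'cV[C]_n) (x : I -> 'cV[C]_n) :
  inner (\sum_i x i) u = \sum_i inner (x i) u.
Proof.
elim/big_rec2: _ => [|i y z _ <-]; last by rewrite innerDl.
rewrite /inner.
have -> : adjmx (0 : 'cV[C]_n) = 0 by apply/matrixP => a b; rewrite !mxE rmorph0.
by rewrite mul0mx mxE.
Qed.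

Lemma inner_conj n (u v : 'cV[C]_n) : inner v u = conjc (inner u v).
Proof.
rewrite !innerE rmorph_sum; apply: eq_bigr => j _.
by rewrite rmorphM /= conjcK mulrC.
Qed.

Lemma vnorm2Z n (c : C) (v : 'cV[C]_n) : vnorm2 (c *: v) = csqn c * vnorm2 v.
Proof.
apply: (@complexI R); rewrite -inner_vnorm2 innerZl innerZr inner_vnorm2.
by rewrite rmorphM /= csqnE mulrA.
Qed.

Lemma vnorm2_eq0 n (v : 'cV[C]_n) : vnorm2 v = 0 -> v = 0.
Proof.
move=> h; apply/matrixP => i j; rewrite ord1 mxE.
have hi : csqn (v i 0) = 0.
  apply/eqP; rewrite eq_le csqn_ge0 andbT -h /vnorm2 (bigD1 i) //= lerDl.
  by rewrite sumr_ge0 // => k _; exact: csqn_ge0.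
move: hi; case: (v i 0) => a b; rewrite /csqn /= => hab.
have [ha hb] : a = 0 /\ b = 0 by split; nra.
by rewrite ha hb.
Qed.

Lemma pythagoras n (I : finType) (x : I -> 'cV[C]_n) :
  (forall i j, i != j -> inner (x i) (x j) = 0) ->
  vnorm2 (\sum_i x i) = \sum_i vnorm2 (x i).
Proof.
move=> orth; apply: (@complexI R); rewrite -inner_vnorm2 rmorph_sum /=.
rewrite inner_suml; apply: eq_bigr => i _.
rewrite inner_sumr (bigD1 i) //= big1 ?addr0 ?inner_vnorm2 // => j ji.
by apply: orth; rewrite eq_sym.
Qed.


Lemma tuple_sum (T : finType) k (F : k.+1.-tuple T -> R) :
  \sum_t F t = \sum_(o : T) \sum_(t : k.-tuple T) F (cons_tuple o t).
Proof.
rewrite pair_big /= (reindex (fun p : T * k.-tuple T => cons_tuple p.1 p.2)) //=.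
exists (fun t => (thead t, behead_tuple t)) => [[o t] _|t _] /=.
  by congr pair; apply: val_inj.
by rewrite [t in RHS]tuple_eta.
Qed.

Lemma tuple0_sum (T : finType) (F : 0.-tuple T -> R) : \sum_t F t = F [tuple].
Proof. rewrite (big_pred1 [tuple]) // => t; apply/esym/eqP; apply: val_inj; by case: t => -[]. Qed.

Section Seq.
Variables (n m : nat) (lab : 'I_m -> R) (E : 'I_m -> 'M[C]_n).

Definition rej k (v : 'cV[C]_n) : R :=
  \sum_(t : k.-tuple 'I_m | ~~ has (fun o => lab o != 0) t) vnorm2 (apply_seq E t v).

Definition tot k (v : 'cV[C]_n) : R :=
  \sum_(t : k.-tuple 'I_m) vnorm2 (apply_seq E t v).

Lemma apply_seqZ t (c : C) v : apply_seq E t (c *: v) = c *: apply_seq E t v.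
Proof. by elim: t v => [|o t IH] v //=; rewrite -scalemxAr IH. Qed.

Lemma rej0 v : rej 0 v = vnorm2 v.
Proof. by rewrite /rej big_mkcond tuple0_sum. Qed.

Lemma tot0 v : tot 0 v = vnorm2 v.
Proof. by rewrite /tot tuple0_sum. Qed.

Lemma rejS k v : rej k.+1 v = \sum_(o | lab o == 0) rej k (E o *m v).
Proof.
rewrite /rej big_mkcond tuple_sum [RHS]big_mkcond; apply: eq_bigr => o _ /=.
case: eqP => h /=.
  by rewrite [RHS]big_mkcond.
by rewrite big1_eq.
Qed.

Lemma totS k v : tot k.+1 v = \sum_o tot k (E o *m v).
Proof. by rewrite /tot tuple_sum. Qed.

Lemma rejZ k (c : C) v : rej k (c *: v) = csqn c * rej k v.
Proof. by rewrite /rej mulr_sumr; apply: eq_bigr => t _; rewrite apply_seqZ vnorm2Z. Qed.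

Lemma rej_eig (c : 'I_m -> C) k x : (forall o, E o *m x = c o *: x) ->
  rej k x = (\sum_(o | lab o == 0) csqn (c o)) ^+ k * vnorm2 x.
Proof.
move=> hc; elim: k => [|k IH]; first by rewrite rej0 expr0 mul1r.
rewrite rejS exprS -mulrA mulr_suml; apply: eq_bigr => o _.
by rewrite hc rejZ IH.
Qed.

Lemma rej_ge0 k v : 0 <= rej k v.
Proof. by rewrite sumr_ge0 // => t _; exact: vnorm2_ge0. Qed.

Lemma rej_family (I : finType) k (x : I -> 'cV[C]_n) :
  (forall i j, i != j -> inner (x i) (x j) = 0) ->
  (forall o i, exists c, E o *m x i = c *: x i) ->
  rej k (\sum_i x i) = \sum_i rej k (x i).
Proof.
elim: k x => [|k IH] x orth eig.
  by rewrite rej0 pythagoras //; apply: eq_bigr => i _; rewrite rej0.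
rewrite rejS.
under eq_bigr => o _ do rewrite mulmx_sumr.
rewrite (eq_bigr (fun o => \sum_i rej k (E o *m x i))); last first.
  move=> o _; apply: IH.
    move=> i j ij; have [c1 ->] := eig o i; have [c2 ->] := eig o j.
    by rewrite innerZl innerZr orth // !mulr0.
  move=> o' i; have [c1 ->] := eig o i; have [c2 h2] := eig o' i.
  by exists c2; rewrite -scalemxAr h2 !scalerA mulrC.
rewrite exchange_big /=; apply: eq_bigr => i _; by rewrite rejS.
Qed.

Hypothesis iso : \sum_o adjmx (E o) *m E o = 1%:M.

Lemma iso_sum v : \sum_o vnorm2 (E o *m v) = vnorm2 v.
Proof.
apply: (@complexI R); rewrite rmorph_sum /=.
have h o : (vnorm2 (E o *m v))%:C = inner v (adjmx (E o) *m E o *m v).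
  by rewrite -inner_vnorm2 -mulmxA [RHS]inner_mulmx adjmxK.
rewrite (eq_bigr _ (fun o _ => h o)).
by rewrite -inner_sumr -mulmx_suml iso mul1mx inner_vnorm2.
Qed.

Lemma tot_eq k v : tot k v = vnorm2 v.
Proof.
elim: k v => [|k IH] v; first by rewrite tot0.
by rewrite totS (eq_bigr _ (fun o _ => IH _)) iso_sum.
Qed.

Lemma accept_eq k v : detect_accept lab E k v = vnorm2 v - rej k v.
Proof. by rewrite -(tot_eq k v) /tot (bigID (fun t : k.-tuple 'I_m => has (fun o => lab o != 0) t)) /= addrK. Qed.

Lemma rej_le k v : rej k v <= vnorm2 v.
Proof.
have := accept_eq k v; rewrite /detect_accept => h.
rewrite -subr_ge0 -h sumr_ge0 // => t _; exact: vnorm2_ge0.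
Qed.

Lemma rej_far (c : 'I_m -> C) k x q : 0 <= q -> (forall o, E o *m x = c o *: x) ->
  \sum_(o | lab o == 0) vnorm2 (E o *m x) <= q * vnorm2 x ->
  rej k x <= q ^+ k * vnorm2 x.
Proof.
move=> q0 hc hs; rewrite (rej_eig c k x hc).
set Q := \sum_(o | _) _.
have Q0 : 0 <= Q by rewrite sumr_ge0 // => o _; exact: csqn_ge0.
have hQ : \sum_(o | lab o == 0) vnorm2 (E o *m x) = Q * vnorm2 x.
  by rewrite mulr_suml; apply: eq_bigr => o _; rewrite hc vnorm2Z.
have [V0|V0] := eqVneq (vnorm2 x) 0; first by rewrite V0 !mulr0.
have Vp : 0 < vnorm2 x by rewrite lt_def V0 vnorm2_ge0.
rewrite ler_pM2r //; apply: lerXn2r; rewrite ?nnegrE //.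
by rewrite -(ler_pM2r Vp) -hQ.
Qed.

End Seq.

Lemma expi_conjmul (a : R) : conjc (expi a) * expi a = 1.
Proof. by rewrite -csqnE /csqn /= cos2Dsin2. Qed.

Lemma expi_conj (a : R) : conjc (expi a) = expi (- a).
Proof. by rewrite /expi /= cosN sinN. Qed.

Lemma expi_pi : expi pi = -1 :> C.
Proof. by rewrite /expi cospi sinpi; apply/eqP; rewrite eq_complex /= oppr0 !eqxx. Qed.

Lemma expi0 : expi 0 = 1 :> C.
Proof. by rewrite /expi cos0 sin0. Qed.

Lemma expi_inj (a b : R) : - pi < a <= pi -> - pi < b <= pi -> expi a = expi b -> a = b.
Proof.
move=> /andP[a1 a2] /andP[b1 b2] [hc hs].
have sneg x : - pi < x < 0 -> sin x < 0.
  move=> /andP[x1 x2]; rewrite -(opprK x) sinN oppr_lt0 sin_gt0_pi //.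
  by rewrite oppr_gt0 x2 ltrNl.
case: (leP 0 a) => a0; case: (leP 0 b) => b0.
- by apply: cos_inj => //; rewrite in_itv /= ?a0 ?b0.
- have := sin_ge0_pi (x := a); rewrite a0 a2 hs => /(_ isT).
  by rewrite leNgt sneg // b1 b0.
- have := sin_ge0_pi (x := b); rewrite b0 b2 -hs => /(_ isT).
  by rewrite leNgt sneg // a1 a0.
- apply: oppr_inj; apply: cos_inj; rewrite ?cosN // in_itv /= ?oppr_ge0 ?ltW //.
  by rewrite ltrNl.
  by rewrite ltrNl.
Qed.


Lemma eig_orth n (U : 'M[C]_n) (x y : 'cV[C]_n) (l1 l2 : C) :
  adjmx U *m U = 1%:M -> U *m x = l1 *: x -> U *m y = l2 *: y ->
  conjc l1 * l1 = 1 -> l1 != l2 -> inner x y = 0.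
Proof.
move=> hU hx hy hl ne.
have h : inner x y = conjc l1 * l2 * inner x y.
  rewrite -{1}[y]mul1mx -hU -mulmxA [LHS]inner_mulmx adjmxK hx hy innerZl innerZr.
  by rewrite mulrA.
have ne1 : conjc l1 * l2 != 1.
  apply: contra ne => /eqP e; apply/eqP.
  by rewrite -[l2]mul1r -hl mulrAC e mul1r.
have : (1 - conjc l1 * l2) * inner x y = 0 by rewrite mulrBl mul1r -h subrr.
by move/eqP; rewrite mulf_eq0 subr_eq0 eq_sym (negbTE ne1) /= => /eqP.
Qed.

Lemma mx11 (B : 'M[C]_1) : B = (B 0 0)%:M.
Proof. by apply/matrixP => i j; rewrite !ord1 mxE eqxx mulr1n. Qed.

Lemma reflE n (mu w : 'cV[C]_n) :
  reflection mu *m w = w - (2%:R * inner mu w) *: mu.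
Proof.
rewrite /reflection mulmxBl mul1mx -scalemxAl -mulmxA [adjmx mu *m w]mx11.
by rewrite mul_mx_scalar scalerA.
Qed.

Lemma refl_adj n (mu : 'cV[C]_n) : adjmx (reflection mu) = reflection mu.
Proof. by rewrite /reflection adjmxD adjmxN adjmxZ adjmx1 adjmxM adjmxK rmorph_nat. Qed.

Lemma adj_mu n (mu : 'cV[C]_n) : vnorm2 mu = 1 -> adjmx mu *m mu = 1%:M.
Proof.
move=> h; rewrite [LHS]mx11 -[(_ *m _) 0 0]/(inner mu mu) inner_vnorm2 h.
by [].
Qed.

Lemma refl_sq n (mu : 'cV[C]_n) : vnorm2 mu = 1 ->
  reflection mu *m reflection mu = 1%:M.
Proof.
move=> h; rewrite /reflection.
set P := mu *m adjmx mu.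
have hP : P *m P = P by rewrite /P mulmxA -(mulmxA mu) adj_mu // mulmx1.
rewrite mulmxBl mul1mx mulmxBr mulmx1 -scalemxAl -scalemxAr hP.
rewrite scalerA opprB addrA.
rewrite -addrA -scalerBl.
have -> : 2%:R * 2%:R - 2%:R = 2%:R :> C by rewrite -natrM -natrB.
by rewrite subrK.
Qed.

Lemma U_unitary n (U2 : 'M[C]_n) (mu : 'cV[C]_n) : unitary U2 -> vnorm2 mu = 1 ->
  adjmx (U2 *m reflection mu) *m (U2 *m reflection mu) = 1%:M.
Proof.
move=> hU h; rewrite adjmxM refl_adj -mulmxA (mulmxA (adjmx U2)) hU mul1mx.
exact: refl_sq.
Qed.

Lemma real_conj m n (A : 'M[C]_(m, n)) : real_mx A -> conjmx A = A.
Proof.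
move=> h; apply/matrixP => i j; rewrite mxE; move: (h i j).
by case: (A i j) => a b /= ->; rewrite oppr0.
Qed.

Lemma conjmxZ m n (c : C) (A : 'M[C]_(m,n)) : conjmx (c *: A) = conjc c *: conjmx A.
Proof. by apply/matrixP => i j; rewrite !mxE rmorphM. Qed.

Lemma conjmxD m n (A B : 'M[C]_(m,n)) : conjmx (A + B) = conjmx A + conjmx B.
Proof. by apply/matrixP => i j; rewrite !mxE rmorphD. Qed.

Lemma conjmxN m n (A : 'M[C]_(m,n)) : conjmx (- A) = - conjmx A.
Proof. by apply/matrixP => i j; rewrite !mxE rmorphN. Qed.

Lemma conjmx1 n : conjmx (1%:M : 'M[C]_n) = 1%:M.
Proof. by apply/matrixP => i j; rewrite !mxE rmorph_nat. Qed.

Lemma conjmx_adj m n (A : 'M[C]_(m,n)) : conjmx (adjmx A) = adjmx (conjmx A).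
Proof. by apply/matrixP => i j; rewrite !mxE. Qed.

Lemma U_real n (U2 : 'M[C]_n) (mu : 'cV[C]_n) : real_mx U2 -> real_mx mu ->
  conjmx (U2 *m reflection mu) = U2 *m reflection mu.
Proof.
move=> hU hm; have hmu := real_conj _ _ _ hm.
rewrite conjmxM real_conj // /reflection conjmxD conjmxN conjmxZ conjmx1.
rewrite conjmxM conjmx_adj hmu.
by rewrite (conjc_nat _ 2).
Qed.

Lemma conj_eig n (U : 'M[C]_n) (w : 'cV[C]_n) (l : C) :
  conjmx U = U -> U *m w = l *: w -> U *m conjmx w = conjc l *: conjmx w.
Proof. by move=> hU hw; rewrite -{1}hU -conjmxM hw conjmxZ. Qed.

Lemma vnorm2_conj n (w : 'cV[C]_n) : vnorm2 (conjmx w) = vnorm2 w.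
Proof.
by apply: eq_bigr => i _; rewrite mxE; case: (w i 0) => a b; rewrite /csqn /= sqrrN.
Qed.


Lemma one_eig_zero n (U2 : 'M[C]_n) (phi0 mu w : 'cV[C]_n) :
  unitary U2 -> U2 *m phi0 = phi0 ->
  (forall v, U2 *m v = v -> exists c, v = c *: phi0) ->
  inner phi0 mu != 0 ->
  U2 *m reflection mu *m w = w -> w = 0.
Proof.
move=> hU hphi huniq hne hw.
have hR : reflection mu *m w = adjmx U2 *m w.
  by rewrite -{2}hw !mulmxA hU mul1mx.
have h1 : inner phi0 (reflection mu *m w) = inner phi0 w.
  by rewrite hR inner_mulmx adjmxK hphi.
move: h1; rewrite reflE innerDr innerNr innerZr => /eqP.
rewrite -subr_eq0 addrAC subrr add0r oppr_eq0 !mulf_eq0 pnatr_eq0 /=.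
rewrite (negbTE hne) orbF => /eqP hmw.
have hRw : reflection mu *m w = w by rewrite reflE hmw mulr0 scale0r subr0.
have [c hc] : exists c, w = c *: phi0 by apply: huniq; rewrite -{2}hw -mulmxA hRw.
move: hmw; rewrite hc innerZr (inner_conj _ phi0 mu) => /eqP.
rewrite mulf_eq0 conjc_eq0 (negbTE hne) orbF => /eqP ->.
by rewrite scale0r.
Qed.

Lemma phit_norm n (phi0 mu : 'cV[C]_n) : vnorm2 phi0 = 1 -> vnorm2 mu = 1 ->
  vnorm2 (tilde_phi phi0 mu) <= 1.
Proof.
move=> h0 hm.
set c := inner mu phi0.
have : (vnorm2 (tilde_phi phi0 mu))%:C = (1 - csqn c)%:C.
  rewrite -inner_vnorm2 /tilde_phi -/c.
  do 2 rewrite ?innerDl ?innerDr ?innerNl ?innerNr ?innerZl ?innerZr.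
  rewrite !inner_vnorm2 h0 hm -/c.
  have -> : inner phi0 mu = conjc c by exact: (inner_conj _ mu phi0).
  rewrite rmorphB /= csqnE; ring.
move/complexI => ->; rewrite gerDl oppr_le0; exact: csqn_ge0.
Qed.


Lemma not_close (D a : R) : D <= 1 -> D <= `|a| -> - pi < a <= pi ->
  ~ close_phase D 0 a.
Proof.
move=> D1 Da /andP[a1 a2] [k hk].
have [k0|k0] := eqVneq k 0.
  move: hk; rewrite k0 mul0r subr0 sub0r normrN => h.
  by move: (lt_le_trans h Da); rewrite ltxx.
have hK : 1 <= `|k%:~R : R|.
  rewrite -intr_norm ler1z; lia.
set X := 0 - a - k%:~R * (2 * pi) in hk.
have tri : `|k%:~R : R| * (2 * pi) <= `|X| + `|a|.
  have -> : `|k%:~R : R| * (2 * pi) = `|(- X) + (- a)|.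
    rewrite /X (_ : - (0 - a - k%:~R * (2 * pi)) - a = k%:~R * (2 * pi)); last by ring.
    rewrite normrM.
    by rewrite (ger0_norm (x := 2 * pi)) // mulr_ge0 // pi_ge0.
  by rewrite (le_trans (ler_normD _ _)) // !normrN.
have ha : `|a| <= pi by rewrite ler_norml a2 andbT ltW // -ltrNl.
have p2 := @pi_ge2 R.
have : 2 * pi <= `|k%:~R : R| * (2 * pi).
  by rewrite ler_peMl // mulr_ge0 // pi_ge0.
lra.
Qed.


Lemma tail_bound (eps T : R) J (d al : 'I_J -> R) dm1 :
  0 < eps < 1 -> 1 <= T -> (forall j, 0 < al j) -> QHT eps d al dm1 <= T ->
  \sum_(j | al j < T^-1) 2 * d j ^+ 2 <= eps.
Proof.
move=> /andP[e0 e1] T1 alp hQ.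
have T0 : 0 < T by apply: lt_le_trans T1.
have nearP j : al j < T^-1 -> T < (al j)^-1.
  by move=> h; rewrite -[T]invrK ltf_pV2 // ?posrE ?invr_gt0.
rewrite /QHT in hQ.
set S := [set y : R | QH_tail d al dm1 y <= eps]%classic in hQ.
have neS : (S !=set0)%classic.
  set y0 := \sum_j (al j)^-1 + pi^-1.
  have s0 : 0 <= \sum_j (al j)^-1 by rewrite sumr_ge0 // => j _; rewrite invr_ge0 ltW.
  have pi0 : 0 <= pi^-1 :> R by rewrite invr_ge0 pi_ge0.
  have y00 : 0 <= y0 by rewrite addr_ge0.
  exists y0; rewrite /S /= /QH_tail ltNge y00 /= big1 => [|j hj].
    by rewrite add0r ifN ?ltW // -leNgt lerDr.
  exfalso; move: hj; apply/negP; rewrite -leNgt /y0.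
  rewrite -[X in X <= _]addr0; apply: lerD => //; rewrite (bigD1 j) //= lerDl.
  by rewrite sumr_ge0 // => i _; rewrite invr_ge0 ltW.
set δ := \big[Num.min/1]_(j | al j < T^-1) ((al j)^-1 - T).
have δ0 : 0 < δ.
  by apply: lt_bigmin => // j hj; rewrite subr_gt0 nearP.
have TT : T < T + δ by rewrite ltrDl.
have [y Sy yl] := inf_lt neS (le_lt_trans hQ TT).
move: Sy; rewrite /S /= /QH_tail; case: ltP => y0 hy; first by move: (lt_le_trans e1 hy); rewrite ltxx.
apply: le_trans hy; rewrite -[X in X <= _]addr0; apply: lerD; last first.
  by case: ifP => _ //; exact: sqr_ge0.
rewrite [X in _ <= X]big_mkcond [X in X <= _]big_mkcond /=; apply: ler_sum => j _.
case: ifP => hj; last by case: ifP => _ //; rewrite mulr_ge0 // sqr_ge0.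
suff -> : y < (al j)^-1 by [].
apply: (lt_le_trans yl); rewrite -lerBrDl.
exact: (bigmin_le_cond _ (P := fun j => al j < T^-1) (fun j => (al j)^-1 - T) hj).
Qed.


Lemma k_bounds (c0 eps : R) : 0 < c0 -> 0 < eps < 1 ->
  c0 * ln eps^-1 <= (detect_reps c0 eps)%:R /\
  (detect_reps c0 eps)%:R < c0 * ln eps^-1 + 1.
Proof.
move=> c0p /andP[e0 e1].
have l0 : 0 < ln eps^-1 by rewrite ln_gt0 // invf_gt1.
set x := c0 * ln eps^-1.
have x0 : 0 < x by rewrite mulr_gt0.
have hk : (detect_reps c0 eps)%:R = (Num.ceil x)%:~R :> R.
  rewrite /detect_reps -/x natr_absz ger0_norm // ceil_ge0.
  by apply: lt_trans x0; rewrite oppr_lt0.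
rewrite hk; have /andP[h1 h2] := ceil_itv x; split => //.
by move: h1; rewrite intrB ltrBlDr.
Qed.

Lemma three_pow (eps : R) k : 0 < eps < 1 -> (ln 3)^-1 * ln eps^-1 <= k%:R ->
  (3^-1)^+k <= eps.
Proof.
move=> /andP[e0 e1] hk.
have l3 : 0 < ln (3 : R) by rewrite ln_gt0 // ltr1n.
have : ln eps^-1 <= ln ((3 : R) ^+ k).
  rewrite lnXn //; have := ler_wpM2l (ltW l3) hk.
  by rewrite mulrA mulfV ?gt_eqF // mul1r mulr_natr.
rewrite ler_ln ?posrE ?invr_gt0 ?exprn_gt0 // => h.
rewrite exprVn -[X in _ <= X]invrK lef_pV2 ?posrE ?invr_gt0 ?exprn_gt0 //.
Qed.


Lemma far_rej n (U : 'M[C]_n) (T : R) m (lab : 'I_m -> R) (E : 'I_m -> 'M[C]_n) k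
  (x : 'cV[C]_n) (a : R) :
  is_estimate U T^-1 lab E -> T^-1 <= 1 -> T^-1 <= `|a| -> - pi < a <= pi ->
  U *m x = expi a *: x -> rej _ _ lab E k x <= (3^-1)^+k * vnorm2 x.
Proof.
move=> [iso eig _] D1 Da ha hx.
have [hc h23] := eig x a ha hx.
have [c hcc] := fin_all_exists hc.
apply: (rej_far _ _ _ _ _ _ _ _ _ hcc); first by rewrite invr_ge0.
have hs : \sum_(o | lab o == 0) vnorm2 (E o *m x) <=
    \sum_(o | ~~ `[< close_phase T^-1 (lab o) a >]) vnorm2 (E o *m x).
  rewrite big_mkcond [X in _ <= X]big_mkcond; apply: ler_sum => o _.
  case: eqP => h0 /=; last by case: ifP => _ //; exact: vnorm2_ge0.
  rewrite ifT //; apply/negP => /asboolP; rewrite h0; exact: not_close.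
have ht := iso_sum _ _ _ iso x.
rewrite (bigID (fun o => `[< close_phase T^-1 (lab o) a >])) /= in ht.
lra.
Qed.


Lemma zeroC : (0:R)%:C = 0 :> C. Proof. by []. Qed.

Lemma rng_al (a : R) : 0 < a -> a < pi -> (- pi < a <= pi) /\ (- pi < - a <= pi).
Proof. move=> h1 h2; have := @pi_gt0 R => h3; split; apply/andP; split; lra. Qed.

Lemma rng_pi : - (pi : R) < (pi : R) <= (pi : R).
Proof. have := @pi_gt0 R => h3; apply/andP; split; lra. Qed.

Lemma neg_pi (a : R) : 0 < a -> pi = - a -> False.
Proof. have := @pi_gt0 R; lra. Qed.

Lemma neg_pos (a b : R) : 0 < a -> 0 < b -> a = - b -> False.
Proof. lra. Qed.

Lemma D_pi (D : R) : D <= 1 -> D <= pi.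
Proof. have := @pi_ge2 R; lra. Qed.

Lemma dd2 (a : R) : a + a <= 2 * a.
Proof. lra. Qed.

Lemma final_num (A p S eps : R) : A <= eps -> p <= eps -> 0 <= p -> 0 <= S -> S <= 1 ->
  A + p * S <= 2 * eps.
Proof. move=> h1 h2 h3 h4 h5; nra. Qed.


Lemma final3 (c L CE T : R) : 0 <= CE * T * (c + L) ->
  (c * L + 1) * (CE * T) <= CE * (c + 1) * (1 + L) * T.
Proof.
move=> h; rewrite -subr_ge0.
have -> : CE * (c + 1) * (1 + L) * T - (c * L + 1) * (CE * T) = CE * T * (c + L) by ring.
exact: h.
Qed.

End S.

Theorem theorem5 (R : realType) :
  exists c0 : R, 0 < c0 /\ exists C : R, 0 < C /\
  forall CE : R, 0 < CE -> exists C' : R, 0 < C' /\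
  forall (n : nat) (U2 : 'M[R[i]]_n) (phi0 mu : 'cV[R[i]]_n) (eps T : R)
    (J : nat) (d0 dm1 : R) (d al : 'I_J -> R) (w0 wm1 : 'cV[R[i]]_n)
    (wp : 'I_J -> 'cV[R[i]]_n)
    (m : nat) (lab : 'I_m -> R) (E : 'I_m -> 'M[R[i]]_n) (Ncalls : nat),
  real_mx U2 -> unitary U2 ->
  real_mx phi0 -> vnorm2 phi0 = 1 -> U2 *m phi0 = phi0 ->
  (forall v : 'cV[R[i]]_n, U2 *m v = v -> exists c : R[i], v = c *: phi0) ->
  real_mx mu -> vnorm2 mu = 1 ->
  let U := U2 *m reflection mu in
  let phit := tilde_phi phi0 mu in
  eigen_decomp U phit d0 dm1 d al w0 wm1 wp ->
  0 < eps < 1 ->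
  Num.max 1 (QHT eps d al dm1) <= T ->
  is_estimate U T^-1 lab E ->
  Ncalls%:R <= CE / T^-1 ->
  let k := detect_reps c0 eps in
  (inner phi0 mu != 0 ->
     `|detect_accept lab E k phit - vnorm2 phit| <= C * eps) /\
  (inner phi0 mu = 0 -> detect_accept lab E k phit = 0) /\
  (k * Ncalls)%:R <= C' * (1 + ln eps^-1) * T.
Proof.
have l3 : 0 < ln (3 : R) by rewrite ln_gt0 // ltr1n.
have c0p : 0 < (ln (3:R))^-1 by rewrite invr_gt0.
exists (ln (3:R))^-1; split => //.
exists 2; split => //.
move=> CE CE0; exists (CE * ((ln (3:R))^-1 + 1)); split.
  by rewrite mulr_gt0 // addr_gt0.
move=> n U2 phi0 mu eps T J d0 dm1 d al w0 wm1 wp m lab E Ncalls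
  U2r U2u phi0r phi0n hphi huniq mur mun U phit hdec heps hT hest hN k.
have /andP[T1 hQ] : (1 <= T) && (QHT eps d al dm1 <= T) by rewrite -ge_max.
have T0 : 0 < T by apply: lt_le_trans T1.
have D1 : T^-1 <= 1 by rewrite invf_le1.
have hUU : adjmx U *m U = 1%:M := U_unitary _ _ _ _ U2u mun.
have hUr : conjmx U = U := U_real _ _ _ _ U2r mur.
have [iso est_eig est_one] := hest.
have [kl ku] := k_bounds _ _ _ c0p heps.
have h3 : (3^-1)^+k <= eps := three_pow _ _ _ heps kl.
split; [|split].
- move=> hne.
  have [hd hd0 hdm1 hal alinj] := hdec.
  have alpos j : 0 < al j by case/andP: (hal j).1.
  have allt j : al j < pi by case/andP: (hal j).1.
  have d00 : d0 = 0.
    case: hd0 => // -[n1 hw0]; exfalso.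
    have w00 := one_eig_zero _ _ _ _ _ _ U2u hphi huniq hne hw0.
    have : vnorm2 w0 = 0 by rewrite w00 /vnorm2 big1 // => i _; rewrite mxE /csqn /= expr0n /= addr0.
    by rewrite n1 => /eqP; rewrite oner_eq0.
  pose I := ('I_1 + ('I_J + 'I_J))%type.
  pose x : I -> 'cV[R[i]]_n := fun i => match i with
    | inl _ => dm1%:C *: wm1
    | inr (inl j) => (d j)%:C *: wp j
    | inr (inr j) => (d j)%:C *: conjmx (wp j) end.
  pose ph : I -> R := fun i => match i with
    | inl _ => pi | inr (inl j) => al j | inr (inr j) => - al j end.
  have hsum : phit = \sum_i x i.
    rewrite hd d00 zeroC scale0r add0r.
    rewrite big_sumType big_ord1 big_sumType /x /= -big_split /= addrC.
    by congr (_ + _); apply: eq_bigr => j _; rewrite scalerDr.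
  have hph i : - pi < ph i <= pi.
    case: i => [a|[j|j]] /=.
    - exact: rng_pi.
    - by case: (rng_al _ _ (alpos j) (allt j)).
    - by case: (rng_al _ _ (alpos j) (allt j)).
  have scl (w : 'cV[R[i]]_n) (l c : R[i]) : U *m w = l *: w -> U *m (c *: w) = l *: (c *: w).
    by move=> hw; rewrite -scalemxAr hw !scalerA mulrC.
  have z0 (w : 'cV[R[i]]_n) (l : R[i]) : U *m ((0:R)%:C *: w) = l *: ((0:R)%:C *: w).
    by rewrite zeroC scale0r mulmx0 scaler0.
  have hUx i : U *m x i = expi (ph i) *: x i.
    case: i => [a|[j|j]] /=.
    - case: hdm1 => [->|[_ hw]]; first exact: z0.
      by apply: scl; rewrite hw expi_pi scaleN1r.
    - case: (hal j).2 => [->|[_ hw]]; first exact: z0.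
      exact: scl.
    - case: (hal j).2 => [->|[_ hw]]; first exact: z0.
      by apply: scl; rewrite -expi_conj; apply: conj_eig.
  have phinj i i' : ph i = ph i' -> i = i'.
    case: i => [a|[j|j]]; case: i' => [b|[j'|j']] /= h.
    - by rewrite (ord1 a) (ord1 b).
    - by have := allt j'; rewrite -h ltxx.
    - by case: (neg_pi _ _ (alpos j') h).
    - by have := allt j; rewrite h ltxx.
    - by rewrite (alinj _ _ h).
    - by case: (neg_pos _ _ _ (alpos j) (alpos j') h).
    - by case: (neg_pi _ _ (alpos j) (esym h)).
    - by case: (neg_pos _ _ _ (alpos j') (alpos j) (esym h)).
    - by rewrite (alinj _ _ (oppr_inj h)).
  have orth i i' : i != i' -> inner (x i) (x i') = 0.
    move=> ne; apply: (eig_orth _ _ _ _ _ _ _ hUU (hUx i) (hUx i') (expi_conjmul _ _)).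
    apply: contra ne => /eqP e; apply/eqP; apply: phinj.
    exact: (expi_inj _ _ _ (hph i) (hph i') e).
  have eig o i : exists c, E o *m x i = c *: x i.
    exact: ((est_eig (x i) (ph i) (hph i) (hUx i)).1 o).
  rewrite accept_eq // addrAC subrr add0r normrN.
  rewrite ger0_norm; last exact: rej_ge0.
  rewrite hsum rej_family //.
  have hV : \sum_i vnorm2 (x i) <= 1.
    by rewrite -pythagoras // -hsum; exact: phit_norm.
  pose nr (i : I) : bool := match i with
    | inl _ => false | inr (inl j) => al j < T^-1 | inr (inr j) => al j < T^-1 end.
  have p3 : 0 <= (3^-1 : R) ^+ k by rewrite exprn_ge0 // invr_ge0.
  have hb i : rej _ _ _ lab E k (x i) <=
      (if nr i then vnorm2 (x i) else 0) + (3^-1)^+k * vnorm2 (x i).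
    case: ifP => hn.
      apply: le_trans (rej_le _ _ _ _ _ iso k (x i)) _.
      by rewrite lerDl mulr_ge0 // vnorm2_ge0.
    rewrite add0r; apply: (far_rej _ _ _ _ _ _ _ _ _ _ hest D1 _ (hph i) (hUx i)).
    case: i hn => [a|[j|j]]; rewrite /nr /ph /= => hn.
    - by rewrite ger0_norm ?pi_ge0 //; apply: D_pi.
    - by rewrite ger0_norm; [rewrite leNgt hn | exact: ltW (alpos j)].
    - by rewrite normrN ger0_norm; [rewrite leNgt hn | exact: ltW (alpos j)].
  apply: le_trans (ler_sum _ (fun i _ => hb i)) _.
  rewrite big_split /= -mulr_sumr.
  have vc (r : R) (w : 'cV[R[i]]_n) : r = 0 \/ vnorm2 w = 1 -> vnorm2 (r%:C *: w) = r ^+ 2.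
    move=> [->|h1]; last by rewrite vnorm2Z h1 mulr1 /csqn /= expr0n /= addr0.
    by rewrite vnorm2Z /csqn /= expr0n /= addr0 !mul0r.
  have hnear : \sum_i (if nr i then vnorm2 (x i) else 0) <= eps.
    rewrite big_sumType big_ord1 big_sumType /= add0r -big_split /=.
    apply: le_trans (tail_bound _ _ _ _ _ _ _ heps T1 alpos hQ).
    rewrite [X in _ <= X]big_mkcond; apply: ler_sum => j _.
    case: ifP => _; last by rewrite addr0.
    have hw : d j = 0 \/ vnorm2 (wp j) = 1 by case: (hal j).2 => [->|[]]; [left|right].
    by rewrite /x vc // vnorm2Z vnorm2_conj -vnorm2Z vc // dd2.
  have S0 : 0 <= \sum_i vnorm2 (x i) by rewrite sumr_ge0 // => i _; exact: vnorm2_ge0.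
  exact: final_num.
- move=> h0.
  have hm : inner mu phi0 = 0 by rewrite (inner_conj _ _ phi0 mu) h0 rmorph0.
  have hph : phit = phi0 by rewrite /phit /tilde_phi hm scale0r subr0.
  have hU1 : U *m phi0 = phi0 by rewrite /U -mulmxA reflE hm mulr0 scale0r subr0.
  have hU0 : U *m phi0 = expi 0 *: phi0 by rewrite expi0 scale1r.
  have hpi : - pi < (0:R) <= pi by rewrite oppr_lt0 pi_gt0 pi_ge0.
  have [hc _] := est_eig phi0 0 hpi hU0.
  have [c hcc] := fin_all_exists hc.
  have h1 := est_one phi0 hU1.
  rewrite hph accept_eq // (rej_eig _ _ _ _ _ c k phi0 hcc).
  have q1 : \sum_(o | lab o == 0) csqn (c o) = 1.
    move: h1; rewrite phi0n.
    by under eq_bigr => o _ do rewrite hcc vnorm2Z phi0n mulr1.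
  by rewrite q1 expr1n mul1r phi0n subrr.
- have hN' : Ncalls%:R <= CE * T by move: hN; rewrite invrK.
  have L0 : 0 < ln eps^-1.
    by case/andP: heps => e0 e1; rewrite ln_gt0 // invf_gt1.
  rewrite natrM.
  apply: (le_trans (ler_pM (ler0n _ _) (ler0n _ _) (ltW ku) hN')).
  apply: final3.
  by rewrite !mulr_ge0 ?addr_ge0 ?ltW.
Qed.
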